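(* Let $\varepsilon,K>0$ be constants with $\varepsilon<1/6$. Let $n$ be sufficiently large in terms of $\varepsilon,K$ and let $G$ be an $n$-vertex graph with $\Delta(G)\leq Kn^{1/3+\varepsilon}$. Suppose $G$ has $q$ copies of $C_4$ and every edge lies in at most $\frac{96\log n}{n^{4/3+\varepsilon}}q$ copies of $C_4$. Then there exist $v\in V(G)$, a positive real $s$ and a symmetric set $\mathcal{D}\subset V(G)^3$ with $|\mathcal{D}|\geq \frac{q}{n\log n}$ such that: (1) for each $(x,y,z)\in\mathcal{D}$, the vertices $v,x,y,z$ are distinct and $vx,xy,yz,zv\in E(G)$; (2) for each $(x,y,z)\in\mathcal{D}$, $d(v,y)\leq s$ and $d(x,z)\leq s$; (3) for every $x\in V(G)$, there are at most $\frac{384(\log n)q}{n^{4/3+\varepsilon}s}$ vertices $y\in V(G)$ for which some $z\in V(G)$ satisfies $(x,y,z)\in\mathcal{D}$.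
   Context: A set $\mathcal{D}$ of triples is symmetric if $(x,y,z)\in\mathcal{D}$ implies $(z,y,x)\in\mathcal{D}$. $d(u,w)$ is the codegree (number of common neighbours) of $u,w$. A copy of $C_4$ is a subgraph isomorphic to the $4$-cycle; $\log$ is the natural logarithm. *)

(* Defs.v *)
From mathcomp Require Import all_boot.
From Stdlib Require Import Reals.
Set Implicit Arguments. Unset Strict Implicit. Unset Printing Implicit Defensive.

Section Graphs.
Variable T : finType.
Variable e : rel T.

Definition simple_graph : Prop := symmetric e /\ irreflexive e.

Definition edge2 (u v : T) : {set T} := [set u; v].

Definition deg (v : T) : nat := #|[set w | e v w]|.
Definition codeg (u w : T) : nat := #|[set x | e u x && e w x]|.

Definition is_c4 (t : T * T * T * T) : bool :=
  let: (a, b, c, d) := t in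
  [&& uniq [:: a; b; c; d], e a b, e b c, e c d & e d a].

Definition c4_edges (t : T * T * T * T) : {set {set T}} :=
  let: (a, b, c, d) := t in
  [set edge2 a b; edge2 b c; edge2 c d; edge2 d a].

(* The copies of C4 in the graph, each copy identified with its edge set
   (a subgraph isomorphic to C4 has no isolated vertices, so it is
   determined by its edges). *)
Definition C4_copies : {set {set {set T}}} :=
  [set c4_edges t | t in [set t | is_c4 t]].

Definition C4_through (u v : T) : nat :=
  #|[set C in C4_copies | edge2 u v \in C]|.

End Graphs.

(* Main.v *)
Require Import Defs.
From mathcomp Require Import all_boot.
From Stdlib Require Import Reals Lra.
Set Implicit Arguments. Unset Strict Implicit. Unset Printing Implicit Defensive.

Lemma edge2C (T : finType) (a b : T) : edge2 a b = edge2 b a.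
Proof. by rewrite /edge2 setUC. Qed.

Lemma codegC (T : finType) (e : rel T) u w : codeg e u w = codeg e w u.
Proof. by rewrite /codeg; apply: eq_card => x; rewrite !inE andbC. Qed.

Lemma edge2E (T : finType) (a b c d : T) :
  (edge2 a b == edge2 c d) = ((a == c) && (b == d)) || ((a == d) && (b == c)).
Proof.
apply/eqP/idP.
  move/setP=> H; move: (H a) (H b) (H c) (H d); rewrite /edge2 !inE !eqxx /= ?orbT.
  by move=> /esym/orP[] /eqP ? /esym/orP[] /eqP ? /orP[] /eqP ? /orP[] /eqP ?; subst; rewrite ?eqxx ?orbT.
case/orP=> /andP[/eqP-> /eqP->] //; exact: edge2C.
Qed.

Lemma is_c4_rot (T : finType) (e : rel T) a b c d :
  symmetric e -> is_c4 e (a,b,c,d) -> is_c4 e (b,c,d,a).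
Proof.
move=> Hs /and5P[Hu H1 H2 H3 H4]; apply/and5P; split => //.
by rewrite -(rot_uniq 1) in Hu.
Qed.

Lemma is_c4_flip (T : finType) (e : rel T) a b c d :
  symmetric e -> is_c4 e (a,b,c,d) -> is_c4 e (a,d,c,b).
Proof.
move=> Hs /and5P[Hu H1 H2 H3 H4]; apply/and5P; split; rewrite 1?Hs //.
by rewrite -rev_uniq -(rot_uniq 3) in Hu.
Qed.

Lemma c4_edges_rot (T : finType) (a b c d : T) :
  c4_edges (b,c,d,a) = c4_edges (a,b,c,d).
Proof.
apply/setP=> E; rewrite /c4_edges !inE.
by case: (E == edge2 a b); case: (E == edge2 b c); case: (E == edge2 c d); case: (E == edge2 d a).
Qed.

Lemma c4_edges_flip (T : finType) (a b c d : T) :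
  c4_edges (a,d,c,b) = c4_edges (a,b,c,d).
Proof.
rewrite /c4_edges (edge2C a d) (edge2C d c) (edge2C c b) (edge2C b a).
apply/setP=> E; rewrite !inE.
by case: (E == edge2 a b); case: (E == edge2 b c); case: (E == edge2 c d); case: (E == edge2 d a).
Qed.

Lemma card_part (X Y : finType) (A : {set X}) (f : X -> Y) :
  #|A| = \sum_y #|[set x in A | f x == y]|.
Proof.
rewrite -sum1_card (partition_big f xpredT) //=; apply: eq_bigr => y _.
by rewrite -sum1_card; apply: eq_bigl => x; rewrite !inE.
Qed.

Lemma pigeon (X Y : finType) (A : {set X}) (f : X -> Y) (y0 : Y) :
  exists y, #|A| <= #|Y| * #|[set x in A | f x == y]|.
Proof.
case: (@arg_maxnP Y y0 xpredT (fun y => #|[set x in A | f x == y]|)) => // y _ Hm.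
exists y; rewrite (card_part A f).
apply: leq_trans (_ : \sum_(y' : Y) #|[set x in A | f x == y]| <= _).
  by apply: leq_sum => y' _; apply: Hm.
by rewrite sum_nat_const.
Qed.

Definition lab (T : finType) (w : T * (T * T * T)) : T * T * T * T :=
  (w.1, w.2.1.1, w.2.1.2, w.2.2).
Definition good (T : finType) (e : rel T) (w : T * (T * T * T)) : bool :=
  is_c4 e (lab w) && (codeg e w.2.1.1 w.2.2 <= codeg e w.1 w.2.1.2).
Definition sig4 (T : finType) (i : nat) (t : T * T * T * T) : T * (T * T * T) :=
  let: (a, b, c, d) := t in
  match i with 0 => (a, (b, c, d)) | 1 => (c, (d, a, b)) | 2 => (a, (d, c, b))
  | _ => (c, (b, a, d)) end.
Definition nrm (T : finType) (e : rel T) (t : T * T * T * T) : T * T * T * T :=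
  let: (a, b, c, d) := t in
  if codeg e b d <= codeg e a c then t else (b, c, d, a).

Lemma nrmP (T : finType) (e : rel T) t : symmetric e -> is_c4 e t ->
  is_c4 e (nrm e t) /\ codeg e (nrm e t).1.1.2 (nrm e t).2 <= codeg e (nrm e t).1.1.1 (nrm e t).1.2
  /\ c4_edges (nrm e t) = c4_edges t.
Proof.
move=> Hs; case: t => [[[a b] c] d] /= H; case: ifP => //= Hc.
split; first exact: is_c4_rot.
split; last exact: c4_edges_rot.
by rewrite (codegC e c a); move/negbT: Hc; rewrite -ltnNge => /ltnW.
Qed.

Lemma sig4_good (T : finType) (e : rel T) (i : nat) t : symmetric e -> is_c4 e t ->
  codeg e t.1.1.2 t.2 <= codeg e t.1.1.1 t.1.2 -> good e (sig4 i t).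
Proof.
move=> Hs; case: t => [[[a b] c] d] /= H Hc.
have H1 := is_c4_rot Hs H; have H2 := is_c4_rot Hs H1.
have H3 := is_c4_flip Hs H; have H4 := is_c4_flip Hs H2.
case: i => [|[|[|i]]]; rewrite /good /lab /=.
- by apply/andP; split; [exact: H | ].
- by apply/andP; split; [exact: H2 | rewrite (codegC e d) (codegC e c)].
- by apply/andP; split; [exact: H3 | rewrite (codegC e d)].
- by apply/andP; split; [exact: H4 | rewrite (codegC e c)].
Qed.

Lemma sig4_edges (T : finType) (i : nat) (t : T * T * T * T) :
  c4_edges (lab (sig4 i t)) = c4_edges t.
Proof.
case: t => [[[a b] c] d].
case: i => [|[|[|i]]] //.
- by change (c4_edges (c,d,a,b) = c4_edges (a,b,c,d)); rewrite c4_edges_rot c4_edges_rot.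
- by change (c4_edges (a,d,c,b) = c4_edges (a,b,c,d)); rewrite c4_edges_flip.
- change (c4_edges (c,b,a,d) = c4_edges (a,b,c,d)).
  by rewrite -(c4_edges_flip c) c4_edges_rot c4_edges_rot.
Qed.

Lemma sig4_inj (T : finType) (i j : 'I_4) (a b c d : T) :
  uniq [:: a; b; c; d] -> sig4 i (a, b, c, d) = sig4 j (a, b, c, d) -> i = j.
Proof.
move=> Hu; case: i => [[|[|[|[|i]]]] Hi] //; case: j => [[|[|[|[|j]]]] Hj] //= E;
  apply/val_inj => //=; case: E => *; subst; move: Hu; rewrite /= ?inE ?eqxx ?orbT ?andbF //.
Qed.

Lemma count4 (T : finType) (e : rel T) (Hs : symmetric e) (u0 : T) :
  4 * #|C4_copies e| <= #|[set w | good e w]|.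
Proof.
pose rep (C : {set {set T}}) := odflt (u0,u0,u0,u0) [pick t | is_c4 e t && (c4_edges t == C)].
have repP C : C \in C4_copies e -> is_c4 e (rep C) /\ c4_edges (rep C) = C.
  move=> /imsetP[t]; rewrite inE => Ht ->; rewrite /rep.
  case: pickP => [t' /andP[H1 /eqP H2]|/(_ t)] //=.
  by rewrite Ht eqxx.
pose F (p : {set {set T}} * 'I_4) := sig4 p.2 (nrm e (rep p.1)).
have <- : #|setX (C4_copies e) [set: 'I_4]| = 4 * #|C4_copies e|.
  by rewrite cardsX cardsT card_ord mulnC.
have Hinj : {in setX (C4_copies e) [set: 'I_4] &, injective F}.
  move=> [C i] [C' j]; rewrite !inE /= => /andP[HC _] /andP[HC' _] /= E.
  case: (repP C HC) => H1 E1; case: (repP C' HC') => H1' E1'.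
  have EC : C = C'.
    have E2 := congr1 (fun w => c4_edges (lab w)) E; cbv beta in E2.
    move: E2; rewrite /F !sig4_edges.
    case: (nrmP Hs H1) => _ [_ ->]; case: (nrmP Hs H1') => _ [_ ->]; by rewrite E1 E1'.
  subst C'; congr pair.
  move: E; rewrite /F /=; case: (nrmP Hs H1) => + _.
  case: (nrm e (rep C)) => [[[a b] c] d] /and5P[Hu _ _ _ _].
  exact: sig4_inj.
rewrite -(card_in_imset Hinj).
apply: subset_leq_card; apply/subsetP => w /imsetP[[C i]] /setXP[HC _] ->.
rewrite inE /F; case: (repP C HC) => H1 _; case: (nrmP Hs H1) => H2 [H3 _]; exact: sig4_good.
Qed.

Lemma c4_inj2 (T : finType) (v x y z y' z' : T) :
  uniq [:: v; x; y; z] -> uniq [:: v; x; y'; z'] ->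
  c4_edges (v, x, y, z) = c4_edges (v, x, y', z') -> y = y' /\ z = z'.
Proof.
move=> Hu Hu' E.
have H1 : edge2 x y \in c4_edges (v, x, y', z') by rewrite -E !inE eqxx ?orbT.
have H2 : edge2 y z \in c4_edges (v, x, y', z') by rewrite -E !inE eqxx ?orbT.
have Ey : y = y'.
  move: H1; rewrite !inE !edge2E.
  move=> H; repeat (case/orP: H => H); case/andP: H => /eqP ? /eqP ?; subst; move: Hu Hu'; rewrite /= ?inE ?eqxx ?orbT ?andbF //.
subst y'; split => //.
move: H2; rewrite !inE !edge2E.
move=> H; repeat (case/orP: H => H); case/andP: H => /eqP ? /eqP ?; subst; move: Hu Hu'; rewrite /= ?inE ?eqxx ?orbT ?andbF //.
Qed.

Lemma uniq4_new (T : finType) (e : rel T) (Hi : irreflexive e) (v x y z z0 : T) :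
  uniq [:: v; x; y; z0] -> e v z -> e y z -> z != x -> uniq [:: v; x; y; z].
Proof.
move=> Hu Hvz Hyz Hzx.
have vz : v != z by apply: contraTneq Hvz => ->; rewrite Hi.
have yz : y != z by apply: contraTneq Hyz => ->; rewrite Hi.
move: Hu; rewrite /= !inE !negb_or => /and4P[/and3P[-> -> _] /andP[-> _] _ _] /=.
by rewrite vz yz (eq_sym x) Hzx.
Qed.

Lemma local_count (T : finType) (e : rel T) (Hs : symmetric e) (Hi : irreflexive e)
  (v x : T) (Y : {set T}) (k : nat) :
  e v x ->
  (forall y, y \in Y -> exists z, uniq [:: v; x; y; z] /\ e x y /\ e y z /\ e z v
      /\ expn 2 k <= codeg e v y) ->
  #|Y| * expn 2 k <= 2 * C4_through e v x.
Proof.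
move=> Hvx HY.
pose Z y := [set z | e v z && e y z && (z != x)].
pose W := [set p : T * T | (p.1 \in Y) && (p.2 \in Z p.1)].
have S1 : forall y, y \in Y -> expn 2 k <= 2 * #|Z y|.
  move=> y Hy; case: (HY y Hy) => z0 [Hu [Hxy [Hyz [Hzv Hk]]]].
  pose N := [set w | e v w && e y w].
  have EZ : Z y = N :\ x by apply/setP => w; rewrite !inE andbC.
  have HxN : x \in N by rewrite !inE Hvx Hs Hxy.
  have Hz0 : z0 \in N :\ x.
    rewrite !inE Hyz Hs Hzv andbT.
    by move: Hu; rewrite /= !inE !negb_or (eq_sym z0) => /and4P[_ /andP[_ ->] _ _].
  have Hc : codeg e v y = #|N| by [].
  move: Hk; rewrite Hc (cardsD1 x N) HxN EZ.
  have : 0 < #|N :\ x| by apply/card_gt0P; exists z0.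
  move=> H0 H1; apply: (leq_trans H1); rewrite mul2n -addnn leq_add2r //.
have S2 : \sum_(y in Y) #|Z y| <= #|W|.
  rewrite (card_part W fst) big_mkcond /=; apply: leq_sum => y _.
  case: ifP => Hy //.
  rewrite -(card_imset (Z y) (f := pair y)); last by move=> a b [].
  apply: subset_leq_card; apply/subsetP => p /imsetP[z Hz ->].
  by move: Hz; rewrite !inE /= Hy eqxx andbT.
have S3 : #|W| <= C4_through e v x.
  rewrite /C4_through.
  have Hc4 : forall p, p \in W -> is_c4 e (v, x, p.1, p.2).
    move=> [y z]; rewrite !inE /= => /andP[Hy /andP[/andP[Hvz Hyz] Hzx]].
    case: (HY y Hy) => z0 [Hu [Hxy _]].
    apply/and5P; split; rewrite ?(Hs z) //; exact: uniq4_new Hu Hvz Hyz Hzx.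
  have Hinj : {in W &, injective (fun p => c4_edges (v, x, p.1, p.2))}.
    move=> [y z] [y' z'] H H' E.
    have := Hc4 _ H; have := Hc4 _ H'; rewrite /= => /and5P[Hu' _ _ _ _] /and5P[Hu _ _ _ _].
    by case: (c4_inj2 Hu Hu' E) => -> ->.
  rewrite -(card_in_imset Hinj); apply: subset_leq_card; apply/subsetP => C /imsetP[p Hp ->].
  rewrite !inE; apply/andP; split; last by rewrite eqxx.
  by apply: imset_f; rewrite inE; exact: Hc4.
rewrite -sum_nat_const.
apply: (@leq_trans (\sum_(y in Y) 2 * #|Z y|)); first by apply: leq_sum => y Hy; exact: S1.
rewrite -big_distrr /= leq_mul2l /=; exact: leq_trans S2 S3.
Qed.

Open Scope R_scope.

Lemma Rle_div_pos (a b c : R) : 0 < c -> a * c <= b -> a <= b / c.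
Proof.
intros Hc H; apply Rmult_le_reg_r with c; auto.
unfold Rdiv; rewrite Rmult_assoc Rinv_l; lra.
Qed.

Lemma Rdiv_le_pos (a b c : R) : 0 < c -> a <= b * c -> a / c <= b.
Proof.
intros Hc H; apply Rmult_le_reg_r with c; auto.
unfold Rdiv; rewrite Rmult_assoc Rinv_l; lra.
Qed.

Lemma INR_expn2 (m : nat) : INR (expn 2 m) = 2 ^ m.
Proof.
elim: m => [|m IH] //=; rewrite expnS -multE mult_INR IH //.
Qed.

Lemma INR_leq (a b : nat) : leq a b -> INR a <= INR b.
Proof. by move/leP; apply: le_INR. Qed.

Lemma INR_muln (a b : nat) : INR (a * b) = INR a * INR b.
Proof. by rewrite -multE mult_INR. Qed.

Lemma ln_le' (x y : R) : 0 < x -> x <= y -> ln x <= ln y.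
Proof.
intros Hx Hxy; destruct (Rle_lt_or_eq_dec _ _ Hxy) as [H|H].
- left; apply ln_increasing; auto.
- rewrite H; lra.
Qed.

Unset Implicit Arguments. Set Strict Implicit.

Theorem lemma2p18 :
  forall eps K : R, 0 < eps -> eps < 1/6 -> 0 < K ->
  exists N : nat, forall (T : finType) (e : rel T),
    simple_graph e ->
    leq N #|T| ->
    let n := INR #|T| in
    (forall v : T, INR (deg e v) <= K * Rpower n (1/3 + eps)) ->
    let q := INR #|C4_copies e| in
    (forall u v : T, e u v ->
       INR (C4_through e u v) <= 96 * ln n / Rpower n (4/3 + eps) * q) ->
    exists (v : T) (s : R) (D : {set T * T * T}),
      0 < s /\
      (forall x y z, (x, y, z) \in D -> (z, y, x) \in D) /\
      INR #|D| >= q / (n * ln n) /\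
      (forall x y z, (x, y, z) \in D ->
         uniq [:: v; x; y; z] /\ e v x /\ e x y /\ e y z /\ e z v) /\
      (forall x y z, (x, y, z) \in D ->
         INR (codeg e v y) <= s /\ INR (codeg e x z) <= s) /\
      (forall x : T,
         INR #|[set y | [exists z, (x, y, z) \in D]]|
           <= 384 * ln n * q / (Rpower n (4/3 + eps) * s)).
Proof.
intros eps K heps heps2 hK; exists 2%nat.
intros T e [Hs Hi] HN n Hdeg q Hthr.
have HT0 : leq 1 #|T| by apply: leq_trans HN.
have [u0 _] : exists u0 : T, u0 \in T by apply/card_gt0P.
set M := trunc_log 2 #|T|.
pose f (w : T * (T * T * T)) : T * 'I_M.+1 := (w.1, inord (trunc_log 2 (codeg e w.1 w.2.1.2))).
pose S := [set w | good e w].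
have [[v k] Hp] := pigeon S f (u0, ord0).
pose D := [set u : T * T * T | ((v, u) \in S) && (f (v, u) == (v, k))].
have Hfib : leq #|[set x in S | f x == (v, k)]| #|D|.
  apply: leq_trans (leq_imset_card (pair v) D); apply: subset_leq_card.
  apply/subsetP => w; rewrite !inE => /andP[Hw /eqP Hf].
  have Ew : w = (v, w.2) by case: w Hw Hf => [a u] /= _ [->].
  apply/imsetP; exists w.2 => //; rewrite !inE -Ew Hw /=; exact/eqP.
have Hcount : leq (4 * #|C4_copies e|) (#|T| * M.+1 * #|D|).
  apply: leq_trans (count4 Hs u0) _; apply: leq_trans Hp _.
  by rewrite card_prod card_ord -!mulnA leq_mul2l leq_mul2l Hfib !orbT.
have HD : forall x y z, (x, y, z) \in D ->
    good e (v, (x, y, z)) /\ trunc_log 2 (codeg e v y) = k.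
  move=> x y z; rewrite !inE => /andP[Hg /eqP [Hk]]; split => //.
  rewrite -Hk inordK // ltnS; apply: leq_trunc_log; exact: max_card.
have HP : 0 < Rpower n (4/3 + eps) by unfold Rpower; apply exp_pos.
have Hn2 : 2 <= n by rewrite /n; have := INR_leq HN; simpl; lra.
have HL : 0 < ln n by rewrite -ln_1; apply ln_increasing; lra.
have Hq0 : 0 <= q by apply pos_INR.
have Hpk : 0 < INR (expn 2 k) by rewrite INR_expn2; apply pow_lt; lra.
exists v, (INR (expn 2 k.+1)), D.
have Hs2 : INR (expn 2 k.+1) = 2 * INR (expn 2 k) by rewrite expnS INR_muln.
split; first lra.
split.
  move=> x y z Hxyz; case: (HD _ _ _ Hxyz) => + _; move: Hxyz.
  rewrite !inE => /andP[_ Hf] /andP[Hc Hle].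
  have -> : f (v, (z, y, x)) = f (v, (x, y, z)) by [].
  rewrite Hf andbT; apply/andP; split; first exact: (is_c4_flip Hs Hc).
  by move: Hle; rewrite /= codegC.
split.
  have HM1 : leq 1 M by apply: trunc_log_max.
  have HM : INR M * ln 2 <= ln n.
    rewrite -ln_pow; last lra.
    apply ln_le'; first (apply pow_lt; lra).
    rewrite -INR_expn2; apply INR_leq; exact: trunc_logP.
  have HM1' : 1 <= INR M by have := INR_leq HM1; simpl; lra.
  have Hl2 := ln_lt_2.
  have HM4 : INR M + 1 <= 4 * ln n by nra.
  have Hc := INR_leq Hcount; rewrite !INR_muln (S_INR M) in Hc.
  have E4 : INR 4 = 4 by simpl; lra.
  rewrite E4 in Hc.
  have Hd0 : 0 <= INR #|D| by apply pos_INR.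
  have H4 : n * (INR M + 1) * INR #|D| <= n * (4 * ln n) * INR #|D|.
    apply Rmult_le_compat_r; first lra; apply Rmult_le_compat_l; lra.
  apply Rle_ge; apply Rdiv_le_pos; first nra.
  rewrite /q; rewrite /n in H4 |- *. set a := INR #|T| in Hc H4 |- *.
  apply Rmult_le_reg_l with 4; first lra.
  apply (Rle_trans _ _ _ Hc); apply (Rle_trans _ _ _ H4). right. set d := INR #|D|. clearbody d. ring.
split.
  move=> x y z /HD [/andP[/and5P[Hu H1 H2 H3 H4] _] _]; repeat split => //.
split.
  move=> x y z /HD [/andP[_ Hle] Hk].
  have H1 : leq (codeg e v y).+1 (expn 2 k.+1) by rewrite -Hk; apply: trunc_log_ltn.
  have H2 : leq (codeg e v y) (expn 2 k.+1) by apply: ltnW.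
  split; apply: INR_leq => //; exact: leq_trans Hle H2.
move=> x; set Y := [set y | [exists z, (x, y, z) \in D]].
rewrite Hs2.
have HPs : 0 < Rpower n (4 / 3 + eps) * (2 * INR (expn 2 k)) by apply Rmult_lt_0_compat; lra.
case: (set_0Vmem Y) => [-> | [y0 Hy0]].
  rewrite cards0 /=; apply Rle_div_pos => //.
  rewrite Rmult_0_l; apply Rmult_le_pos => //; lra.
move: Hy0; rewrite inE => /existsP[z0 /HD [/andP[/and5P[_ Hvx _ _ _] _] _]].
have Hloc : leq (#|Y| * expn 2 k) (2 * C4_through e v x).
  apply: (local_count Hs Hi Hvx) => y; rewrite inE => /existsP[z Hz].
  case: (HD _ _ _ Hz) => /andP[/and5P[Hu _ H2 H3 H4] _] Hk; exists z; repeat split => //.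
  rewrite -Hk; apply: trunc_logP => //; apply/card_gt0P; exists x.
  by rewrite inE Hvx Hs H2.
have Hl := INR_leq Hloc; rewrite !INR_muln in Hl.
have E2 : INR 2 = 2 by simpl; lra.
rewrite E2 in Hl.
have Hc := Hthr v x Hvx.
set c := INR (C4_through e v x) in Hl Hc.
set P := Rpower n (4 / 3 + eps) in Hc HPs HP |- *.
set y := INR #|Y| in Hl |- *.
have Hy0 : 0 <= y by rewrite /y; apply pos_INR.
set p := INR (expn 2 k) in Hl HPs Hpk |- *.
set L := ln n in Hc HL |- *.
clearbody c P y p L.
have HcP : c * P <= 96 * L * q.
  have := Rmult_le_compat_r P _ _ (Rlt_le _ _ HP) Hc.
  have -> : 96 * L / P * q * P = 96 * L * q by field; lra.
  done.
apply Rle_div_pos => //; nra.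
Qed.
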